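(* Let $n\ge2$, $\epsilon=\pm$, and $\lambda=(\lambda_1\ge\lambda_2\ge\dots\ge\lambda_r\ge0)$ a partition of $n$ with $\lambda_1\le n/2$. Then the unipotent character $\psi^\lambda$ of $\mathrm{GL}^\epsilon_n(q)$ satisfies $\psi^\lambda(1)\ge q^{n^2/4}$.
   Context: $\mathrm{GL}^+_n(q)=\mathrm{GL}_n(q)$, $\mathrm{GL}^-_n(q)=\mathrm{GU}_n(q)$. Unipotent characters $\psi^\lambda$ are labeled by partitions $\lambda\vdash n$ in the standard way ($(n)$ trivial, $(1^n)$ Steinberg), with degree given by $\psi^\lambda(1)=q^{a(\lambda)}\prod_{i=1}^n(q^i-\epsilon^i)/\prod_h(q^{l(h)}-\epsilon^{l(h)})$, where $a(\lambda)=\sum_i(i-1)\lambda_i$, $h$ runs over the hooks of the Young diagram of $\lambda$ and $l(h)$ is the hook length. *)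

(* Defs.v *)
From Stdlib Require Import Reals Arith List ZArith Znumtheory.
Open Scope R_scope.

(* A partition of n: a (finite) nonincreasing list of naturals
   lambda_1 >= lambda_2 >= ... >= lambda_r >= 0 summing to n.
   Trailing zero parts are allowed, as in the paper. *)
Definition is_partition (l : list nat) (n : nat) : Prop :=
  (forall i : nat, (nth (S i) l 0 <= nth i l 0)%nat) /\
  fold_right Nat.add 0%nat l = n.

(* lambda_i, 1-indexed *)
Definition part (l : list nat) (i : nat) : nat := nth (i - 1) l 0%nat.

Definition conj_part (l : list nat) (j : nat) : nat :=
  length (filter (fun x => Nat.leb j x) l).

(* a(lambda) = sum_i (i-1) lambda_i *)
Fixpoint a_aux (k : nat) (l : list nat) : nat :=
  match l with
  | nil => 0%nat
  | x :: t => (k * x + a_aux (S k) t)%nat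
  end.
Definition a_inv (l : list nat) : nat := a_aux 0 l.

Definition hook_lengths (l : list nat) : list nat :=
  flat_map (fun i =>
    map (fun j => ((part l i - j) + (conj_part l j - i) + 1)%nat)
        (seq 1 (part l i)))
    (seq 1 (length l)).

Definition prodR (s : list R) : R := fold_right Rmult 1 s.

Definition unip_degree (q : nat) (eps : R) (n : nat) (l : list nat) : R :=
  (INR q) ^ (a_inv l)
  * prodR (map (fun i => INR q ^ i - eps ^ i) (seq 1 n))
  / prodR (map (fun h => INR q ^ h - eps ^ h) (hook_lengths l)).

Definition prime_power (q : nat) : Prop :=
  exists (p : Z) (k : nat), prime p /\ (1 <= k)%nat /\ Z.of_nat q = (p ^ Z.of_nat k)%Z.

(* Main.v *)
Require Import Defs.
From Stdlib Require Import Reals Arith List ZArith Znumtheory Lra Lia Bool.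
Import ListNotations.
Open Scope nat_scope.

Definition sumN (l : list nat) : nat := fold_right Nat.add 0 l.
Definition sqN (l : list nat) : nat := fold_right (fun x s => x * x + s) 0 l.
Fixpoint noninc (l : list nat) : Prop :=
  match l with [] => True | x :: t => (forall y, In y t -> y <= x) /\ noninc t end.
Definition rowhooks (x : nat) (t : list nat) : list nat :=
  map (fun j => ((x - j) + (conj_part (x :: t) j - 1) + 1)) (seq 1 x).

Lemma conj_cons_le x t j : j <= x -> conj_part (x :: t) j = S (conj_part t j).
Proof.
  intros H. unfold conj_part. simpl. destruct (Nat.leb_spec j x); [reflexivity|lia].
Qed.

Lemma conj_cons x t j : conj_part (x :: t) j = (if j <=? x then 1 else 0) + conj_part t j.
Proof. unfold conj_part. simpl. destruct (j <=? x); reflexivity. Qed.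

Lemma flat_map_map_S {B} (F : nat -> list B) l :
  flat_map F (map S l) = flat_map (fun i => F (S i)) l.
Proof. induction l; simpl; [reflexivity| now rewrite IHl]. Qed.

Lemma flat_map_ext_in' {A B} (F G : A -> list B) l :
  (forall a, In a l -> F a = G a) -> flat_map F l = flat_map G l.
Proof.
  induction l; simpl; intros H; [reflexivity|].
  rewrite H by auto. rewrite IHl by auto. reflexivity.
Qed.

Lemma nth_le_head x t i : (forall y, In y t -> y <= x) -> nth i t 0 <= x.
Proof.
  revert i; induction t; intros i H; destruct i; simpl; try lia.
  - apply H; simpl; auto.
  - apply IHt. intros; apply H; simpl; auto.
Qed.

Lemma hook_cons x t : (forall y, In y t -> y <= x) ->
  hook_lengths (x :: t) = rowhooks x t ++ hook_lengths t.
Proof.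
  intros Hx. unfold hook_lengths. simpl length.
  change (seq 1 (S (length t))) with (1 :: seq 2 (length t)).
  rewrite <- seq_shift. simpl flat_map at 1.
  f_equal.
  rewrite flat_map_map_S. apply flat_map_ext_in'.
  intros i Hi. apply in_seq in Hi. destruct i as [|i']; [lia|].
  unfold part. simpl (S (S i') - 1). simpl (S i' - 1).
  change (nth (S i') (x :: t) 0) with (nth i' t 0). rewrite Nat.sub_0_r.
  apply map_ext_in. intros j Hj. apply in_seq in Hj.
  assert (nth i' t 0 <= x) by (apply nth_le_head; auto).
  rewrite conj_cons_le by lia. lia.
Qed.

Lemma conj_le_sum t j : 1 <= j -> conj_part t j <= sumN t.
Proof.
  induction t; intros Hj; unfold conj_part in *; simpl; [lia|].
  destruct (Nat.leb_spec j a); simpl; specialize (IHt Hj); unfold sumN in *; simpl; lia.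
Qed.

Lemma conj_anti t j k : j <= k -> conj_part t k <= conj_part t j.
Proof.
  intros H; induction t; unfold conj_part in *; simpl; [lia|].
  destruct (Nat.leb_spec k a); destruct (Nat.leb_spec j a); simpl; lia.
Qed.

Lemma sum_app l1 l2 : sumN (l1 ++ l2) = sumN l1 + sumN l2.
Proof. induction l1; simpl; unfold sumN in *; simpl; lia. Qed.

Lemma sum_seq_ind x : 1 <= x -> True. Proof. auto. Qed.

Lemma sum_ind_seq x y : sumN (map (fun j => if j <=? y then 1 else 0) (seq 1 x)) = Nat.min x y.
Proof.
  induction x; [simpl; reflexivity|].
  rewrite seq_S, map_app, sum_app, IHx. cbn [map]. unfold sumN at 1. cbn [fold_right].
  destruct (Nat.leb_spec (1 + x) y); lia.
Qed.

Lemma sum_map_add {A} (f g : A -> nat) l :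
  sumN (map (fun a => f a + g a) l) = sumN (map f l) + sumN (map g l).
Proof. induction l; unfold sumN in *; simpl; [reflexivity| rewrite IHl; lia]. Qed.

Lemma sum_conj_seq x t : (forall y, In y t -> y <= x) ->
  sumN (map (conj_part t) (seq 1 x)) = sumN t.
Proof.
  induction t; intros H.
  - unfold conj_part; simpl. induction (seq 1 x); simpl; auto.
  - erewrite map_ext by (intros; apply conj_cons).
    rewrite sum_map_add, sum_ind_seq. rewrite IHt.
    + assert (a <= x) by (apply H; simpl; auto). unfold sumN; simpl; lia.
    + intros; apply H; simpl; auto.
Qed.

Lemma sum_tri x : 2 * sumN (map (fun j => x - j + 1) (seq 1 x)) = x * (x + 1).
Proof.
  induction x; [reflexivity|].
  change (seq 1 (S x)) with (1 :: seq 2 x).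
  replace (seq 2 x) with (map S (seq 1 x)) by apply seq_shift. cbn [map]. rewrite map_map.
  unfold sumN in *; cbn [fold_right].
  erewrite map_ext by (intros; replace (S x - S a + 1) with (x - a + 1) by lia; reflexivity).
  rewrite Nat.mul_add_distr_l, IHx. lia.
Qed.

Lemma rowhooks_sum x t : (forall y, In y t -> y <= x) ->
  2 * sumN (rowhooks x t) = x * x + x + 2 * sumN t.
Proof.
  intros H. unfold rowhooks.
  erewrite map_ext_in.
  2:{ intros j Hj. apply in_seq in Hj. rewrite conj_cons_le by lia.
      replace (x - j + (S (conj_part t j) - 1) + 1) with ((x - j + 1) + conj_part t j) by lia.
      reflexivity. }
  rewrite sum_map_add, Nat.mul_add_distr_l, sum_tri, sum_conj_seq by auto. lia.
Qed.

Lemma a_aux_S k t : a_aux (S k) t = sumN t + a_aux k t.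
Proof.
  revert k; induction t; intros k; simpl; [reflexivity|].
  rewrite IHt. unfold sumN; simpl; lia.
Qed.

Lemma a_inv_cons x t : a_inv (x :: t) = sumN t + a_inv t.
Proof. unfold a_inv. simpl. rewrite a_aux_S. lia. Qed.

Lemma hook_sum l : noninc l ->
  2 * sumN (hook_lengths l) = 2 * a_inv l + sumN l + sqN l.
Proof.
  induction l as [|x t IH]; intros Hl.
  - reflexivity.
  - destruct Hl as [Hx Ht]. rewrite hook_cons by auto. rewrite sum_app, Nat.mul_add_distr_l, rowhooks_sum by auto.
    rewrite IH by auto. rewrite a_inv_cons. unfold sumN, sqN; simpl. lia.
Qed.

Lemma hooks_pos l h : In h (hook_lengths l) -> 1 <= h.
Proof.
  unfold hook_lengths. intros H. apply in_flat_map in H. destruct H as [i [_ H]].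
  apply in_map_iff in H. destruct H as [j [<- _]]. lia.
Qed.

Lemma sum_seq1 n : 2 * sumN (seq 1 n) = n * (n + 1).
Proof.
  induction n; [reflexivity|]. rewrite seq_S, sum_app. rewrite Nat.mul_add_distr_l, IHn.
  unfold sumN; simpl. lia.
Qed.

Lemma nth_chain l : (forall i, nth (S i) l 0 <= nth i l 0) -> forall k, nth k l 0 <= nth 0 l 0.
Proof.
  intros H k; induction k; [lia|]. specialize (H k). lia.
Qed.

Lemma noninc_of_nth l : (forall i, nth (S i) l 0 <= nth i l 0) -> noninc l.
Proof.
  induction l as [|x t IH]; intros H; simpl; [auto|]. split.
  - intros y Hy. destruct (In_nth t y 0 Hy) as [k [_ Hk]].
    pose proof (nth_chain _ H (S k)) as Hc. simpl in Hc. lia.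
  - apply IH. intros i. specialize (H (S i)). simpl in H. exact H.
Qed.

Lemma noninc_split l : noninc l -> exists p k, l = p ++ repeat 0 k /\ (forall y, In y p -> 0 < y).
Proof.
  induction l as [|x t IH]; intros Hl.
  - exists [], 0. split; [reflexivity| intros y []].
  - destruct Hl as [Hx Ht]. destruct (IH Ht) as [p [k [Ep Hp]]].
    destruct x as [|x].
    + destruct p as [|y p].
      * exists [], (S k). simpl. rewrite Ep. split; [reflexivity| intros y []].
      * exfalso. assert (y <= 0) by (apply Hx; rewrite Ep; simpl; auto).
        assert (0 < y) by (apply Hp; simpl; auto). lia.
    + exists (S x :: p), k. rewrite Ep. split; [reflexivity|].
      intros y [<-|Hy]; [lia| auto].
Qed.

Lemma conj_app_zeros l k j : 1 <= j -> conj_part (l ++ repeat 0 k) j = conj_part l j.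
Proof.
  intros Hj. unfold conj_part. rewrite filter_app, length_app.
  assert (filter (fun x => j <=? x) (repeat 0 k) = []) as E.
  { induction k; simpl; auto. destruct (Nat.leb_spec j 0); [lia|auto]. }
  rewrite E. simpl. lia.
Qed.

Lemma noninc_app_l p z : noninc (p ++ z) -> noninc p.
Proof.
  induction p as [|x t IH]; simpl; [auto|]. intros [H1 H2]. split; auto.
  intros y Hy. apply H1. apply in_or_app; auto.
Qed.

Lemma hook_zeros k : hook_lengths (repeat 0 k) = [].
Proof.
  induction k; [reflexivity|]. simpl repeat. rewrite hook_cons.
  - rewrite IHk. reflexivity.
  - intros y Hy. apply repeat_spec in Hy. lia.
Qed.

Lemma hook_app_zeros p k : noninc (p ++ repeat 0 k) ->
  hook_lengths (p ++ repeat 0 k) = hook_lengths p.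
Proof.
  induction p as [|x t IH]; intros H.
  - apply hook_zeros.
  - simpl in H. destruct H as [H1 H2]. simpl (_ ++ _). rewrite hook_cons by auto.
    rewrite hook_cons by (intros y Hy; apply H1; apply in_or_app; auto).
    rewrite IH by auto. f_equal. unfold rowhooks. apply map_ext_in.
    intros j Hj. apply in_seq in Hj.
    change (x :: t ++ repeat 0 k) with ((x :: t) ++ repeat 0 k).
    rewrite conj_app_zeros by lia. reflexivity.
Qed.

Lemma a_aux_zeros i p k : a_aux i (p ++ repeat 0 k) = a_aux i p.
Proof.
  revert i; induction p as [|x t IH]; intros i; simpl.
  - revert i; induction k; intros i; simpl; auto. rewrite IHk. lia.
  - rewrite IH. reflexivity.
Qed.

Lemma sum_zeros p k : sumN (p ++ repeat 0 k) = sumN p.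
Proof.
  rewrite sum_app. enough (sumN (repeat 0 k) = 0) by lia.
  induction k; simpl; auto.
Qed.

Lemma sq_le l c : (forall y, In y l -> y <= c) -> sqN l <= c * sumN l.
Proof.
  induction l as [|x t IH]; intros H; unfold sqN, sumN in *; simpl; [lia|].
  assert (x <= c) by (apply H; simpl; auto).
  specialize (IH (fun y Hy => H y (or_intror Hy))). nia.
Qed.

Lemma noninc_head_bound x t : noninc (x :: t) -> forall y, In y (x :: t) -> y <= x.
Proof. intros [H _] y [<-|Hy]; auto. Qed.

Fixpoint gen (fuel n k : nat) : list (list nat) :=
  match fuel with
  | 0 => if n =? 0 then [[]] else []
  | S f => if n =? 0 then [[]] else
      flat_map (fun j => map (cons j) (gen f (n - j) j)) (seq 1 (Nat.min n k))
  end.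

Lemma gen_complete l : forall fuel n k, noninc l -> (forall y, In y l -> 1 <= y) ->
  (forall y, In y l -> y <= k) -> sumN l = n -> n <= fuel -> In l (gen fuel n k).
Proof.
  induction l as [|x t IH]; intros fuel n k Hl Hp Hk Hs Hf.
  - simpl in Hs. subst n. destruct fuel; simpl; auto.
  - destruct Hl as [Hx Ht]. assert (1 <= x) by (apply Hp; simpl; auto).
    assert (x <= k) by (apply Hk; simpl; auto).
    change (sumN (x :: t)) with (x + sumN t) in Hs.
    destruct fuel as [|f]; [lia|]. simpl.
    destruct (Nat.eqb_spec n 0); [lia|].
    apply in_flat_map. exists x. split.
    + apply in_seq. lia.
    + apply in_map. apply IH; auto.
      * intros; apply Hp; simpl; auto.
      * lia.
      * lia.
Qed.

Definition E2 : list (list nat) :=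
  [[1;1;1];[2;1;1];[1;1;1;1];[2;2;1];[2;1;1;1];[1;1;1;1;1];[3;2;1];[3;1;1;1];[3;3;1]].

Definition leqb (a b : list nat) : bool := if list_eq_dec Nat.eq_dec a b then true else false.

Definition okb (n : nat) (l : list nat) : bool :=
  (length l <? 3) || (2 * sqN l + 4 * length l <=? n * n) || existsb (leqb l) E2.

Lemma small_check n : n <= 20 -> forallb (okb n) (gen n n (n / 2)) = true.
Proof.
  intros Hn. do 21 (destruct n as [|n]; [vm_compute; reflexivity|]). lia.
Qed.

Lemma len_le_sum l : (forall y, In y l -> 1 <= y) -> length l <= sumN l.
Proof.
  induction l; simpl; intros H; [lia|]. assert (1 <= a) by auto.
  specialize (IHl (fun y Hy => H y (or_intror Hy))). unfold sumN in *; simpl; lia.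
Qed.

Lemma big_case x y R r sq n :
  n = x + y + R -> 1 <= y -> y <= x -> 2 * x <= n -> 1 <= R -> r <= 2 + R ->
  sq <= x * n -> sq <= x * x + y * (y + R) -> 21 <= n -> 2 * sq + 4 * r <= n * n.
Proof.
  intros Hn Hy1 Hyx Hx HR Hr H1 H2 H21.
  destruct (Nat.le_gt_cases 4 (n - 2 * x)) as [Hw|Hw].
  - assert (r <= n) by lia.
    assert (exists w, n = 2 * x + w /\ 4 <= w) as [w [Ew Hw4]] by (exists (n - 2 * x); lia).
    assert (n * n = 2 * x * n + w * n) by (rewrite Ew at 1; ring).
    assert (4 * n <= w * n) by nia. lia.
  -
    assert (n - 2 * x <= 3) by lia.
    set (w := n - 2 * x) in *.
    assert (n = 2 * x + w) by lia. subst n.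
    assert (y + R = x + w) by lia.
    nia.
Qed.

Lemma classify p n : noninc p -> (forall y, In y p -> 1 <= y) -> sumN p = n -> 2 <= n ->
  2 * nth 0 p 0 <= n ->
  (exists m, p = [m; m]) \/ 2 * sqN p + 4 * length p <= n * n \/ In p E2.
Proof.
  intros Hl Hp Hs Hn Hh.
  destruct p as [|x [|y rest]].
  - simpl in Hs. lia.
  - simpl in Hs, Hh. unfold sumN in Hs; simpl in Hs. assert (1 <= x) by (apply Hp; simpl; auto). lia.
  - destruct Hl as [Hx [Hy Hr]].
    assert (y <= x) by (apply Hx; simpl; auto).
    change (sumN (x :: y :: rest)) with (x + (y + sumN rest)) in Hs. simpl in Hh.
    destruct rest as [|z rest'].
    + left. exists x. unfold sumN in Hs; simpl in Hs. f_equal. f_equal. lia.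
    + set (rest := z :: rest') in *.
      assert (HR : length rest <= sumN rest) by (apply len_le_sum; intros; apply Hp; simpl; auto).
      assert (1 <= length rest) by (simpl; lia).
      destruct (Nat.le_gt_cases n 20) as [Hs20|Hb].
      * assert (Hin : In (x :: y :: rest) (gen n n (n / 2))).
        { apply gen_complete.
          - simpl. auto.
          - exact Hp.
          - intros w Hw. assert (w <= x) by (destruct Hw as [<-|Hw]; [lia| apply Hx; auto]).
            assert (x <= n / 2) by (apply Nat.div_le_lower_bound; lia). lia.
          - change (sumN (x :: y :: rest)) with (x + (y + sumN rest)). lia.
          - lia. }
        pose proof (small_check n Hs20) as Hc. rewrite forallb_forall in Hc.
        specialize (Hc _ Hin). unfold okb in Hc.
        apply orb_true_iff in Hc. destruct Hc as [Hc|Hc].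
        -- apply orb_true_iff in Hc. destruct Hc as [Hc|Hc].
           ++ apply Nat.ltb_lt in Hc. simpl in Hc. lia.
           ++ apply Nat.leb_le in Hc. right; left; exact Hc.
        -- right; right. apply existsb_exists in Hc. destruct Hc as [e [He Heq]].
           unfold leqb in Heq. destruct (list_eq_dec Nat.eq_dec (x :: y :: rest) e); [subst; auto| discriminate].
      * right; left.
        assert (Hq1 : sqN (x :: y :: rest) <= x * sumN (x :: y :: rest)).
        { apply sq_le. intros w Hw. destruct Hw as [<-|Hw]; [lia| apply Hx; auto]. }
        assert (Hq2 : sqN rest <= y * sumN rest) by (apply sq_le; auto).
        change (sqN (x :: y :: rest)) with (x * x + (y * y + sqN rest)) in *.
        change (sumN (x :: y :: rest)) with (x + (y + sumN rest)) in Hq1.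
        change (length (x :: y :: rest)) with (2 + length rest).
        apply (big_case x y (sumN rest) (2 + length rest) (x * x + (y * y + sqN rest)) n); try lia.
        all: try (apply Hp; simpl; auto; fail). all: subst n; nia.
Qed.
Open Scope R_scope.

Lemma prodR_app l1 l2 : prodR (l1 ++ l2) = prodR l1 * prodR l2.
Proof. induction l1; simpl; [ring| rewrite IHl1; ring]. Qed.

Lemma prodR_rev l : prodR (rev l) = prodR l.
Proof. induction l; simpl; [reflexivity|]. rewrite prodR_app, IHl. simpl. ring. Qed.

Lemma prodR_pos {A} (g : A -> R) l : (forall a, In a l -> 0 < g a) -> 0 < prodR (map g l).
Proof.
  induction l; simpl; intros H; [lra|]. apply Rmult_lt_0_compat; auto.
Qed.

Lemma prodR_le {A} (g h : A -> R) l : (forall a, In a l -> 0 <= g a <= h a) ->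
  prodR (map g l) <= prodR (map h l).
Proof.
  induction l; simpl; intros H; [lra|].
  assert (Hg : 0 <= prodR (map g l)).
  { clear IHl. induction l; simpl; [lra|]. apply Rmult_le_pos.
    - apply H; simpl; auto.
    - apply IHl. intros b Hb. apply H. simpl in *. destruct Hb; auto. }
  apply Rmult_le_compat; auto; try (apply H; simpl; auto).
  all: try (apply IHl; intros; apply H; simpl; auto).
Qed.

Lemma rev_seq s k : rev (seq s k) = map (fun j => (s + k - j)%nat) (seq 1 k).
Proof.
  revert s; induction k; intros s; [reflexivity|].
  change (seq s (S k)) with (s :: seq (S s) k). simpl rev.
  rewrite IHk. rewrite seq_S, map_app. simpl map at 2.
  f_equal.
  - apply map_ext_in. intros j Hj. rewrite Nat.add_succ_r. reflexivity.
  - simpl. f_equal. lia.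
Qed.

Lemma pow_le_mono_small (tinv : R) a b : 0 <= tinv <= 1 -> (a <= b)%nat -> tinv ^ b <= tinv ^ a.
Proof.
  intros Ht Hab. replace b with (a + (b - a))%nat by lia. rewrite pow_add.
  assert (tinv ^ (b - a) <= 1).
  { rewrite <- (pow1 (b - a)). apply pow_incr. lra. }
  assert (0 <= tinv ^ a) by (apply pow_le; lra). nra.
Qed.

Lemma neg1_pow k : (-1) ^ k = if Nat.odd k then -1 else 1.
Proof.
  destruct (Nat.Even_or_Odd k) as [[i ->]|[i ->]].
  - rewrite pow_1_even. replace (Nat.odd (2 * i)) with false; [reflexivity|].
    symmetry. apply Bool.not_true_is_false. rewrite Nat.odd_spec. intros Ho.
    apply (Nat.Even_Odd_False (2*i)); auto. exists i; reflexivity.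
  - replace (2 * i + 1)%nat with (S (2 * i)) by lia. rewrite pow_1_odd.
    replace (Nat.odd (S (2 * i))) with true; [reflexivity|].
    symmetry. apply Nat.odd_spec. exists i. lia.
Qed.

Section F.
Variable Q eps : R.
Hypothesis HQ : 2 <= Q.
Hypothesis Heps : eps = 1 \/ eps = -1.

Definition tinv := / Q.
Lemma t_bounds : 0 < tinv <= / 2.
Proof. unfold tinv. split; [apply Rinv_0_lt_compat; lra| apply Rinv_le_contravar; lra]. Qed.

Definition fk (k : nat) : R := 1 - (eps * tinv) ^ k.

Lemma y_fk k : Q ^ k - eps ^ k = Q ^ k * fk k.
Proof.
  unfold fk, tinv. rewrite Rpow_mult_distr, pow_inv. field. apply pow_nonzero. lra.
Qed.

Lemma prod_y L : prodR (map (fun k => Q ^ k - eps ^ k) L) = Q ^ (sumN L) * prodR (map fk L).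
Proof.
  induction L; simpl; [ring|]. rewrite IHL, y_fk. unfold sumN; simpl. rewrite pow_add. ring.
Qed.

Lemma abs_et : Rabs (eps * tinv) <= / 2.
Proof.
  pose proof t_bounds.
  destruct Heps as [-> | ->]; [replace (1 * tinv) with tinv by ring| replace (-1 * tinv) with (- tinv) by ring;
  rewrite Rabs_Ropp]; rewrite Rabs_pos_eq; lra.
Qed.

Lemma fk_pos k : (1 <= k)%nat -> 0 < fk k.
Proof.
  intros Hk. unfold fk. pose proof abs_et.
  assert ((eps * tinv) ^ k <= (/2) ^ k) by (apply pow_maj_Rabs; auto).
  assert ((/2) ^ k <= (/2) ^ 1) by (apply pow_le_mono_small; lra || lia).
  simpl in *. lra.
Qed.

Lemma Hd_pos L : (forall h, In h L -> (1 <= h)%nat) -> 0 < prodR (map fk L).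
Proof. intros H. apply prodR_pos. intros; apply fk_pos; auto. Qed.

End F.

Definition Dexp (n : nat) (l : list nat) : nat :=
  (a_inv l + sumN (seq 1 n) - sumN (hook_lengths l))%nat.

Lemma Dexp_eq n l : noninc l -> sumN l = n -> (sqN l <= n * n)%nat ->
  (2 * Dexp n l = n * n - sqN l)%nat /\ (sumN (hook_lengths l) <= a_inv l + sumN (seq 1 n))%nat.
Proof.
  intros Hl Hn Hsq. pose proof (hook_sum l Hl). pose proof (sum_seq1 n). unfold Dexp. lia.
Qed.

Lemma unip_formula q eps n l : 2 <= INR q -> (eps = 1 \/ eps = -1) ->
  noninc l -> sumN l = n -> (sqN l <= n * n)%nat ->
  unip_degree q eps n l =
  INR q ^ (Dexp n l) * prodR (map (fk (INR q) eps) (seq 1 n))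
    / prodR (map (fk (INR q) eps) (hook_lengths l)).
Proof.
  intros HQ He Hl Hn Hsq. destruct (Dexp_eq n l Hl Hn Hsq) as [_ Hle].
  unfold unip_degree. rewrite !prod_y by lra.
  assert (Hpos : 0 < prodR (map (fk (INR q) eps) (hook_lengths l))).
  { apply (Hd_pos (INR q) eps HQ He). apply hooks_pos. }
  assert (E : INR q ^ a_inv l * INR q ^ sumN (seq 1 n) =
              INR q ^ sumN (hook_lengths l) * INR q ^ Dexp n l).
  { rewrite <- !pow_add. f_equal. unfold Dexp. lia. }
  assert (INR q ^ sumN (hook_lengths l) <> 0) by (apply pow_nonzero; lra).
  set (N := prodR (map (fk (INR q) eps) (seq 1 n))) in *.
  set (Hd := prodR (map (fk (INR q) eps) (hook_lengths l))) in *.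
  replace (INR q ^ a_inv l * (INR q ^ sumN (seq 1 n) * N))
    with (INR q ^ sumN (hook_lengths l) * (INR q ^ Dexp n l * N)) by (rewrite <- Rmult_assoc, <- E; ring).
  field. split; lra.
Qed.

Section G.
Variable Q eps : R.
Hypothesis HQ : 2 <= Q.
Hypothesis Heps : eps = 1 \/ eps = -1.
Notation f := (fk Q eps).

Lemma block_rev m x : prodR (map f (seq (1 + m) x)) =
  prodR (map (fun j => f (1 + m + x - j)%nat) (seq 1 x)).
Proof. rewrite <- prodR_rev, <- map_rev, rev_seq, map_map. reflexivity. Qed.

Lemma seq_split m x : seq 1 (x + m) = seq 1 m ++ seq (1 + m) x.
Proof. rewrite Nat.add_comm, seq_app. reflexivity. Qed.

Lemma sumN_cons x t : sumN (x :: t) = (x + sumN t)%nat.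
Proof. reflexivity. Qed.

Lemma rowhook_le x t j : (1 <= j <= x)%nat -> (forall y, In y t -> y <= x)%nat ->
  ((x - j) + (conj_part (x :: t) j - 1) + 1 <= 1 + sumN t + x - j)%nat.
Proof.
  intros Hj Ht. rewrite conj_cons_le by lia. pose proof (conj_le_sum t j). lia.
Qed.

Lemma prodR_nonneg L : (forall h, In h L -> (1 <= h)%nat) -> 0 <= prodR (map f L).
Proof. intros H. left. apply Hd_pos; auto. Qed.

Lemma eps1_bound l : eps = 1 -> noninc l ->
  prodR (map f (hook_lengths l)) <= prodR (map f (seq 1 (sumN l))).
Proof.
  intros He. induction l as [|x t IH]; intros Hl; [simpl; lra|].
  destruct Hl as [Hx Ht]. rewrite hook_cons by auto. rewrite sumN_cons, seq_split, !map_app, !prodR_app.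
  rewrite Rmult_comm. apply Rmult_le_compat.
  - apply prodR_nonneg. intros h Hh. apply hooks_pos with t; auto.
  - apply prodR_nonneg. unfold rowhooks. intros h Hh. apply in_map_iff in Hh.
    destruct Hh as [j [<- _]]. lia.
  - apply IH; auto.
  - rewrite block_rev. unfold rowhooks. rewrite map_map. apply prodR_le.
    intros j Hj. apply in_seq in Hj. split; [left; apply fk_pos; auto; lia|].
    pose proof (rowhook_le x t j ltac:(lia) Hx). unfold fk. rewrite He, !Rpow_mult_distr, !pow1.
    pose proof (t_bounds Q HQ).
    assert (tinv Q ^ (1 + sumN t + x - j) <= tinv Q ^ ((x - j) + (conj_part (x :: t) j - 1) + 1)).
    { apply pow_le_mono_small; [lra| exact H]. }
    lra.
Qed.
End G.

Section N.
Variable Q : R.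
Hypothesis HQ : 2 <= Q.
Notation f := (fk Q (-1)).
Notation tt := (tinv Q).

Lemma tb : 0 < tt <= / 2.
Proof. apply t_bounds; auto. Qed.

Lemma fneg k : f k = if Nat.odd k then 1 + tt ^ k else 1 - tt ^ k.
Proof.
  unfold fk. rewrite Rpow_mult_distr, neg1_pow. destruct (Nat.odd k); ring.
Qed.

Lemma tpow_pos k : 0 < tt ^ k.
Proof. apply pow_lt. pose proof tb; lra. Qed.

Lemma tpow_le k : (1 <= k)%nat -> tt ^ k <= / 2.
Proof.
  intros Hk. pose proof tb. assert (tt ^ k <= tt ^ 1) by (apply pow_le_mono_small; lra || lia).
  simpl in *. lra.
Qed.

Lemma odd_SS s : Nat.odd (S (S s)) = Nat.odd s.
Proof. rewrite Nat.odd_succ, Nat.even_succ. reflexivity. Qed.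

Lemma odd_S s : Nat.odd (S s) = negb (Nat.odd s).
Proof. rewrite Nat.odd_succ, <- Nat.negb_odd. reflexivity. Qed.

Definition P s g := prodR (map f (seq s g)).

Lemma P_nonneg s g : (1 <= s)%nat -> 0 <= P s g.
Proof.
  intros Hs. apply (prodR_nonneg Q (-1) HQ (or_intror eq_refl)). intros h Hh.
  apply in_seq in Hh. lia.
Qed.

Lemma P_S s g : P s (S g) = f s * P (S s) g.
Proof. reflexivity. Qed.

Lemma parity_step g : forall s, (1 <= s)%nat ->
  (Nat.odd s = false -> P s g <= 1) /\ (Nat.odd s = true -> 1 <= P s g).
Proof.
  induction g as [g IH] using (well_founded_induction lt_wf). intros s Hs.
  destruct g as [|[|g]].
  - unfold P; simpl. lra.
  - unfold P; simpl. rewrite fneg. pose proof (tpow_pos s).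
    split; intros E; rewrite E; lra.
  - rewrite !P_S. rewrite (fneg s), (fneg (S s)), odd_S. simpl (tt ^ S s).
    pose proof (tpow_le s Hs). pose proof (tpow_pos s). pose proof tb.
    destruct (IH g ltac:(lia) (S (S s)) ltac:(lia)) as [IHe IHo].
    rewrite odd_SS in IHe, IHo. pose proof (P_nonneg (S (S s)) g ltac:(lia)).
    destruct (Nat.odd s) eqn:E; simpl; split; intros E'; try discriminate.
    + specialize (IHo eq_refl).
      assert (1 <= (1 + tt ^ s) * (1 - tt * tt ^ s)) by nra. nra.
    + specialize (IHe eq_refl).
      assert (0 <= (1 - tt ^ s) * (1 + tt * tt ^ s) <= 1) by (split; nra). nra.
Qed.

Lemma P_odd_ge1 s g : (1 <= s)%nat -> Nat.odd s = true -> 1 <= P s g.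
Proof. intros H1 H2. apply (parity_step g s H1). auto. Qed.

Lemma P_even_le1 s g : (1 <= s)%nat -> Nat.odd s = false -> P s g <= 1.
Proof. intros H1 H2. apply (parity_step g s H1). auto. Qed.

Lemma P_lower s g : (1 <= s)%nat -> 1 - tt ^ s <= P s g.
Proof.
  intros Hs. pose proof (tpow_pos s). destruct (Nat.odd s) eqn:E.
  - pose proof (P_odd_ge1 s g Hs E). lra.
  - destruct g; [unfold P; simpl; lra|]. rewrite P_S, fneg, E.
    assert (Nat.odd (S s) = true) by (rewrite odd_S, E; reflexivity).
    pose proof (P_odd_ge1 (S s) g ltac:(lia) H0). pose proof (tpow_le s Hs). nra.
Qed.

Lemma P_upper_odd s g : (1 <= s)%nat -> Nat.odd s = true -> P s g <= 1 + tt ^ s.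
Proof.
  intros Hs E. pose proof (tpow_pos s). destruct g; [unfold P; simpl; lra|].
  rewrite P_S, fneg, E.
  assert (Nat.odd (S s) = false) by (rewrite odd_S, E; reflexivity).
  pose proof (P_even_le1 (S s) g ltac:(lia) H0). pose proof (P_nonneg (S s) g ltac:(lia)). nra.
Qed.

Lemma N_ge1 n : 1 <= P 1 n.
Proof. apply P_odd_ge1; auto. Qed.

Definition gg b := if Nat.odd b then f b else 1.
Definition G k s := prodR (map gg (seq s k)).

Lemma gg_ge1 b : 1 <= gg b.
Proof. unfold gg. destruct (Nat.odd b) eqn:E; [|lra]. rewrite fneg, E. pose proof (tpow_pos b). lra. Qed.

Lemma f_le_gg b : (1 <= b)%nat -> 0 <= f b <= gg b.
Proof.
  intros Hb. split; [left; apply fk_pos; auto|].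
  unfold gg. destruct (Nat.odd b) eqn:E; [lra|]. rewrite fneg, E. pose proof (tpow_pos b). lra.
Qed.

Lemma G_ge1 k s : 1 <= G k s.
Proof.
  revert s; induction k; intros s; unfold G in *; simpl; [lra|].
  pose proof (gg_ge1 s). specialize (IHk (S s)). nra.
Qed.

Lemma G_last k s : G (S k) s = G k s * gg (s + k).
Proof. unfold G. rewrite seq_S, map_app, prodR_app. simpl. ring. Qed.

Lemma G_mono k d s : G k s <= G (k + d) s.
Proof.
  induction d; [rewrite Nat.add_0_r; lra|]. rewrite Nat.add_succ_r, G_last.
  pose proof (gg_ge1 (s + (k + d))). pose proof (G_ge1 (k + d) s). nra.
Qed.

Lemma G_bound k : forall s, (1 <= s)%nat ->
  G k s <= 1 + 2 * tt ^ (if Nat.odd s then s else S s).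
Proof.
  induction k; intros s Hs.
  - unfold G; cbn [seq map prodR fold_right]. pose proof (tpow_pos s). pose proof (tpow_pos (S s)).
    destruct (Nat.odd s); lra.
  - unfold G; simpl. fold (G k (S s)). specialize (IHk (S s) ltac:(lia)).
    rewrite odd_S in IHk. pose proof (G_ge1 k (S s)).
    unfold gg. destruct (Nat.odd s) eqn:E; simpl in IHk |- *.
    + rewrite fneg, E. pose proof (tpow_le s Hs). pose proof (tpow_pos s). pose proof tb.
      simpl in IHk.
      assert (H4 : tt * tt <= / 4) by nra.
      assert (tt * (tt * tt ^ s) <= / 4 * tt ^ s).
      { rewrite <- Rmult_assoc. apply Rmult_le_compat_r; lra. }
      nra.
    + lra.
Qed.

Lemma prodR_cons a l : prodR (a :: l) = a * prodR l.
Proof. reflexivity. Qed.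

Lemma row_dec x : forall h : nat -> nat,
  (1 <= x)%nat ->
  (forall j, (1 <= j)%nat -> (j < x)%nat -> (h (S j) < h j)%nat) ->
  (forall j, (1 <= j <= x)%nat -> (1 <= h j)%nat) ->
  prodR (map (fun j => f (h j)) (seq 1 x)) <= G (h 1%nat) 1.
Proof.
  induction x; intros h Hx Hd Hp; [lia|].
  change (seq 1 (S x)) with (1%nat :: seq 2 x).
  replace (seq 2 x) with (map S (seq 1 x)) by apply seq_shift.
  rewrite map_cons, prodR_cons, map_map.
  assert (Hh1 : (1 <= h 1%nat)%nat) by (apply Hp; lia).
  destruct (h 1%nat) as [|k] eqn:Ek; [lia|].
  rewrite G_last. replace (1 + k)%nat with (S k) by lia.
  pose proof (f_le_gg (S k) ltac:(lia)).
  destruct x as [|x].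
  - simpl. pose proof (G_ge1 k 1). pose proof (gg_ge1 (S k)). nra.
  - assert (IH' : prodR (map (fun j => f (h (S j))) (seq 1 (S x))) <= G (h 2%nat) 1).
    { apply (IHx (fun j => h (S j))); try lia.
      - intros j H1 H2. apply Hd; lia.
      - intros j H1. apply Hp. lia. }
    assert (h 2%nat <= k)%nat by (specialize (Hd 1%nat ltac:(lia) ltac:(lia)); lia).
    assert (G (h 2%nat) 1 <= G k 1) as HG.
    { pose proof (G_mono (h 2%nat) (k - h 2%nat) 1) as HG'.
      replace (h 2%nat + (k - h 2%nat))%nat with k in HG' by lia. exact HG'. }
    assert (0 <= prodR (map (fun j => f (h (S j))) (seq 1 (S x)))).
    { pose proof (prodR_nonneg Q (-1) HQ (or_intror eq_refl) (map (fun j => h (S j)) (seq 1 (S x)))) as HH.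
      rewrite map_map in HH. apply HH.
      intros b Hb. apply in_map_iff in Hb. destruct Hb as [j [<- Hj]]. apply in_seq in Hj.
      apply Hp. lia. }
    rewrite (Rmult_comm (G k 1)). apply Rmult_le_compat; try lra.
Qed.

End N.

Section M.
Variable Q : R.
Hypothesis HQ : 2 <= Q.
Notation f := (fk Q (-1)).
Notation tt := (tinv Q).

Lemma row_le_Q x ts : (1 <= x)%nat -> (forall y, In y ts -> y <= x)%nat ->
  prodR (map f (rowhooks x ts)) <= Q.
Proof.
  intros Hx Ht. unfold rowhooks. rewrite map_map.
  eapply Rle_trans.
  - apply (row_dec Q HQ x (fun j => ((x - j) + (conj_part (x :: ts) j - 1) + 1)%nat)); auto.
    + intros j H1 H2. pose proof (conj_anti (x :: ts) j (S j) ltac:(lia)). lia.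
    + intros; lia.
  - eapply Rle_trans; [apply G_bound; auto|]. simpl. rewrite Rmult_1_r.
    pose proof (tb Q HQ). unfold tinv in *.
    assert (/ Q <= / 2) by lra.
    assert (2 * / Q <= 1).
    { apply (Rmult_le_reg_r Q); [lra|]. field_simplify; lra. }
    lra.
Qed.

Lemma Hd_le_Q l : noninc l -> (forall y, In y l -> (1 <= y)%nat) ->
  prodR (map f (hook_lengths l)) <= Q ^ length l.
Proof.
  induction l as [|x ts IH]; intros Hl Hp; [simpl; lra|].
  destruct Hl as [Hx Ht]. rewrite hook_cons by auto. rewrite map_app, prodR_app.
  simpl length. simpl pow. apply Rmult_le_compat.
  - apply (prodR_nonneg Q (-1) HQ (or_intror eq_refl)). unfold rowhooks.
    intros h Hh. apply in_map_iff in Hh. destruct Hh as [j [<- _]]. lia.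
  - apply (prodR_nonneg Q (-1) HQ (or_intror eq_refl)). intros h Hh. eapply hooks_pos; eauto.
  - apply row_le_Q; auto. apply Hp; simpl; auto.
  - apply IH; auto. intros; apply Hp; simpl; auto.
Qed.

Lemma rev_map_P s m g : (forall j, In j (seq 1 m) -> g j = (s + m - j)%nat) ->
  prodR (map f (map g (seq 1 m))) = P Q s m.
Proof.
  intros H. unfold P. rewrite <- (prodR_rev (map f (seq s m))), <- map_rev, rev_seq, !map_map.
  f_equal. apply map_ext_in. intros j Hj. rewrite H; auto.
Qed.

Lemma mm_hooks m : hook_lengths [m; m] = rowhooks m [m] ++ rowhooks m [].
Proof.
  rewrite hook_cons by (intros y [<-|[]]; lia). rewrite hook_cons by (intros y []).
  change (hook_lengths []) with (@nil nat). rewrite app_nil_r. reflexivity.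
Qed.

Lemma mm_ratio m : (1 <= m)%nat ->
  prodR (map f (hook_lengths [m; m])) <= prodR (map f (seq 1 (m + m))).
Proof.
  intros Hm. rewrite mm_hooks, map_app, prodR_app.
  unfold rowhooks. rewrite (rev_map_P 2 m), (rev_map_P 1 m).
  2:{ intros j Hj. apply in_seq in Hj. unfold conj_part. simpl.
      destruct (Nat.leb_spec j m); [|lia]. simpl. destruct j; lia. }
  2:{ intros j Hj. apply in_seq in Hj. unfold conj_part. simpl.
      destruct (Nat.leb_spec j m); [|lia]. simpl. destruct j as [|[|j]]; lia. }
  rewrite seq_split, map_app, prodR_app. fold (P Q 1 m). fold (P Q (1 + m) m).
  rewrite Rmult_comm. apply Rmult_le_compat_l; [apply P_nonneg; auto|].
  destruct m as [|[|m]]; [lia| apply Rle_refl|].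
  pose proof (tb Q HQ).
  assert (P Q 2 (S (S m)) <= (1 - tt ^ 2) * (1 + tt ^ 3)).
  { rewrite P_S, fneg by auto. simpl Nat.odd. cbv iota.
    apply Rmult_le_compat_l.
    - simpl. nra.
    - apply P_upper_odd; auto. }
  assert (1 - tt ^ 3 <= P Q (1 + S (S m)) (S (S m))).
  { eapply Rle_trans; [|apply P_lower; auto; lia].
    assert (tt ^ (1 + S (S m)) <= tt ^ 3) by (apply pow_le_mono_small; lra || lia). lra. }
  assert ((1 - tt ^ 2) * (1 + tt ^ 3) <= 1 - tt ^ 3).
  { assert (0 <= tt * tt * (1 - 2 * tt + tt ^ 3)).
    { apply Rmult_le_pos; [nra|]. assert (0 <= tt ^ 3) by (apply pow_le; lra). lra. }
    simpl in *. nra. }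
  lra.
Qed.

End M.

Definition hornerR (cs : list R) (s : R) : R := fold_right (fun c acc => c + s * acc) 0 cs.

Lemma hornerR_nonneg cs s : 0 <= s -> Forall (fun c => 0 <= c) cs -> 0 <= hornerR cs s.
Proof.
  intros Hs H. induction H; simpl; [lra|]. apply Rplus_le_le_0_compat; auto.
  apply Rmult_le_pos; auto.
Qed.

Lemma exc_core q (a K n : nat) (H : list nat) (cs : list R) : 2 <= INR q ->
  (forall h, In h H -> (1 <= h)%nat) ->
  Forall (fun c => 0 <= c) cs ->
  (forall s, (s + 2) ^ a * prodR (map (fun k => (s + 2) ^ k - (-1) ^ k) (seq 1 n))
     - (s + 2) ^ K * prodR (map (fun k => (s + 2) ^ k - (-1) ^ k) H) = hornerR cs s) ->
  INR q ^ K <= INR q ^ a * prodR (map (fun k => INR q ^ k - (-1) ^ k) (seq 1 n))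
     / prodR (map (fun k => INR q ^ k - (-1) ^ k) H).
Proof.
  intros HQ Hh Hcs Hid.
  assert (HB : 0 < prodR (map (fun k => INR q ^ k - (-1) ^ k) H)).
  { rewrite (prod_y (INR q) (-1) HQ). apply Rmult_lt_0_compat; [apply pow_lt; lra|].
    apply Hd_pos; auto. }
  specialize (Hid (INR q - 2)). replace (INR q - 2 + 2) with (INR q) in Hid by ring.
  pose proof (hornerR_nonneg cs (INR q - 2) ltac:(lra) Hcs).
  apply (Rmult_le_reg_r (prodR (map (fun k => INR q ^ k - (-1) ^ k) H))); auto.
  unfold Rdiv. rewrite Rmult_assoc, Rinv_l by lra. lra.
Qed.

Lemma exc0 q : 2 <= INR q ->
  Rpower (INR q) (INR (3 * 3) / 4) <= unip_degree q (-1) 3 [1%nat;1%nat;1%nat].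
Proof.
  intros HQ. apply Rle_trans with (INR q ^ 3).
  { rewrite <- Rpower_pow by lra. apply Rle_Rpower; [lra|].
    replace (INR (3 * 3)) with (IZR 9) by (rewrite INR_IZR_INZ; reflexivity).
    replace (INR 3) with (IZR 3) by (rewrite INR_IZR_INZ; reflexivity). lra. }
  unfold unip_degree.
  replace (hook_lengths [1%nat;1%nat;1%nat]) with [3%nat;2%nat;1%nat] by (vm_compute; reflexivity).
  replace (a_inv [1%nat;1%nat;1%nat]) with 3%nat by (vm_compute; reflexivity).
  apply exc_core with (cs := [0]); auto.
  - intros h Hh; repeat (destruct Hh as [<-|Hh]; [lia|]); destruct Hh.
  - repeat constructor; lra.
  - intros s. unfold hornerR. cbn [seq map prodR fold_right]. ring.
Qed.

Lemma exc1 q : 2 <= INR q ->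
  Rpower (INR q) (INR (4 * 4) / 4) <= unip_degree q (-1) 4 [2%nat;1%nat;1%nat].
Proof.
  intros HQ. apply Rle_trans with (INR q ^ 4).
  { rewrite <- Rpower_pow by lra. apply Rle_Rpower; [lra|].
    replace (INR (4 * 4)) with (IZR 16) by (rewrite INR_IZR_INZ; reflexivity).
    replace (INR 4) with (IZR 4) by (rewrite INR_IZR_INZ; reflexivity). lra. }
  unfold unip_degree.
  replace (hook_lengths [2%nat;1%nat;1%nat]) with [4%nat;1%nat;2%nat;1%nat] by (vm_compute; reflexivity).
  replace (a_inv [2%nat;1%nat;1%nat]) with 3%nat by (vm_compute; reflexivity).
  apply exc_core with (cs := [3240; 24732; 85590; 177897; 247954; 244965; 176668; 94274; 37260; 10782; 2222; 309; 26; 1]); auto.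
  - intros h Hh; repeat (destruct Hh as [<-|Hh]; [lia|]); destruct Hh.
  - repeat constructor; lra.
  - intros s. unfold hornerR. cbn [seq map prodR fold_right]. ring.
Qed.

Lemma exc2 q : 2 <= INR q ->
  Rpower (INR q) (INR (4 * 4) / 4) <= unip_degree q (-1) 4 [1%nat;1%nat;1%nat;1%nat].
Proof.
  intros HQ. apply Rle_trans with (INR q ^ 4).
  { rewrite <- Rpower_pow by lra. apply Rle_Rpower; [lra|].
    replace (INR (4 * 4)) with (IZR 16) by (rewrite INR_IZR_INZ; reflexivity).
    replace (INR 4) with (IZR 4) by (rewrite INR_IZR_INZ; reflexivity). lra. }
  unfold unip_degree.
  replace (hook_lengths [1%nat;1%nat;1%nat;1%nat]) with [4%nat;3%nat;2%nat;1%nat] by (vm_compute; reflexivity).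
  replace (a_inv [1%nat;1%nat;1%nat;1%nat]) with 6%nat by (vm_compute; reflexivity).
  apply exc_core with (cs := [58320; 493776; 1940760; 4705344; 7883685; 9687147; 9036384; 6531281; 3698147; 1646394; 574508; 155502; 32007; 4843; 508; 33; 1]); auto.
  - intros h Hh; repeat (destruct Hh as [<-|Hh]; [lia|]); destruct Hh.
  - repeat constructor; lra.
  - intros s. unfold hornerR. cbn [seq map prodR fold_right]. ring.
Qed.

Lemma exc3 q : 2 <= INR q ->
  Rpower (INR q) (INR (5 * 5) / 4) <= unip_degree q (-1) 5 [2%nat;2%nat;1%nat].
Proof.
  intros HQ. apply Rle_trans with (INR q ^ 7).
  { rewrite <- Rpower_pow by lra. apply Rle_Rpower; [lra|].
    replace (INR (5 * 5)) with (IZR 25) by (rewrite INR_IZR_INZ; reflexivity).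
    replace (INR 7) with (IZR 7) by (rewrite INR_IZR_INZ; reflexivity). lra. }
  unfold unip_degree.
  replace (hook_lengths [2%nat;2%nat;1%nat]) with [4%nat;2%nat;3%nat;1%nat;1%nat] by (vm_compute; reflexivity).
  replace (a_inv [2%nat;2%nat;1%nat]) with 4%nat by (vm_compute; reflexivity).
  apply exc_core with (cs := [174960; 1947888; 10064088; 32169312; 71491383; 117598401; 148730097; 148204335; 118213756; 76217147; 39916692; 16992687; 5858971; 1622603; 355805; 60385; 7650; 681; 38; 1]); auto.
  - intros h Hh; repeat (destruct Hh as [<-|Hh]; [lia|]); destruct Hh.
  - repeat constructor; lra.
  - intros s. unfold hornerR. cbn [seq map prodR fold_right]. ring.
Qed.

Lemma exc4 q : 2 <= INR q ->
  Rpower (INR q) (INR (5 * 5) / 4) <= unip_degree q (-1) 5 [2%nat;1%nat;1%nat;1%nat].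
Proof.
  intros HQ. apply Rle_trans with (INR q ^ 7).
  { rewrite <- Rpower_pow by lra. apply Rle_Rpower; [lra|].
    replace (INR (5 * 5)) with (IZR 25) by (rewrite INR_IZR_INZ; reflexivity).
    replace (INR 7) with (IZR 7) by (rewrite INR_IZR_INZ; reflexivity). lra. }
  unfold unip_degree.
  replace (hook_lengths [2%nat;1%nat;1%nat;1%nat]) with [5%nat;1%nat;3%nat;2%nat;1%nat] by (vm_compute; reflexivity).
  replace (a_inv [2%nat;1%nat;1%nat;1%nat]) with 6%nat by (vm_compute; reflexivity).
  apply exc_core with (cs := [1539648; 17589312; 94249008; 316016640; 745525836; 1318038516; 1814917485; 1996107090; 1783353037; 1308806268; 794519551; 400325688; 167464208; 57994695; 16522366; 3831936; 711960; 103440; 11322; 878; 43; 1]); auto.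
  - intros h Hh; repeat (destruct Hh as [<-|Hh]; [lia|]); destruct Hh.
  - repeat constructor; lra.
  - intros s. unfold hornerR. cbn [seq map prodR fold_right]. ring.
Qed.

Lemma exc5 q : 2 <= INR q ->
  Rpower (INR q) (INR (5 * 5) / 4) <= unip_degree q (-1) 5 [1%nat;1%nat;1%nat;1%nat;1%nat].
Proof.
  intros HQ. apply Rle_trans with (INR q ^ 7).
  { rewrite <- Rpower_pow by lra. apply Rle_Rpower; [lra|].
    replace (INR (5 * 5)) with (IZR 25) by (rewrite INR_IZR_INZ; reflexivity).
    replace (INR 7) with (IZR 7) by (rewrite INR_IZR_INZ; reflexivity). lra. }
  unfold unip_degree.
  replace (hook_lengths [1%nat;1%nat;1%nat;1%nat;1%nat]) with [5%nat;4%nat;3%nat;2%nat;1%nat] by (vm_compute; reflexivity).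
  replace (a_inv [1%nat;1%nat;1%nat;1%nat;1%nat]) with 10%nat by (vm_compute; reflexivity).
  apply exc_core with (cs := [35925120; 458830656; 2803950432; 10915730640; 30404112840; 64510113228; 108382448130; 147958587359; 167101451213; 158134812289; 126536842167; 86149713961; 50100629074; 24935697947; 10622258241; 3865884864; 1197484420; 313786104; 68939333; 12539689; 1855042; 217535; 19457; 1247; 51; 1]); auto.
  - intros h Hh; repeat (destruct Hh as [<-|Hh]; [lia|]); destruct Hh.
  - repeat constructor; lra.
  - intros s. unfold hornerR. cbn [seq map prodR fold_right]. ring.
Qed.

Lemma exc6 q : 2 <= INR q ->
  Rpower (INR q) (INR (6 * 6) / 4) <= unip_degree q (-1) 6 [3%nat;2%nat;1%nat].
Proof.
  intros HQ. apply Rle_trans with (INR q ^ 9).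
  { rewrite <- Rpower_pow by lra. apply Rle_Rpower; [lra|].
    replace (INR (6 * 6)) with (IZR 36) by (rewrite INR_IZR_INZ; reflexivity).
    replace (INR 9) with (IZR 9) by (rewrite INR_IZR_INZ; reflexivity). lra. }
  unfold unip_degree.
  replace (hook_lengths [3%nat;2%nat;1%nat]) with [5%nat;3%nat;1%nat;3%nat;1%nat;1%nat] by (vm_compute; reflexivity).
  replace (a_inv [3%nat;2%nat;1%nat]) with 4%nat by (vm_compute; reflexivity).
  apply exc_core with (cs := [3464208; 118098000; 1085924232; 5380171632; 17613498033; 41963621643; 76892928993; 112234508064; 133618197708; 131903699256; 109226847039; 76482151359; 45521250423; 23096336597; 9997412872; 3687285145; 1154882075; 305407038; 67603891; 12371522; 1838938; 216433; 19409; 1246; 51; 1]); auto.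
  - intros h Hh; repeat (destruct Hh as [<-|Hh]; [lia|]); destruct Hh.
  - repeat constructor; lra.
  - intros s. unfold hornerR. cbn [seq map prodR fold_right]. ring.
Qed.

Lemma exc7 q : 2 <= INR q ->
  Rpower (INR q) (INR (6 * 6) / 4) <= unip_degree q (-1) 6 [3%nat;1%nat;1%nat;1%nat].
Proof.
  intros HQ. apply Rle_trans with (INR q ^ 9).
  { rewrite <- Rpower_pow by lra. apply Rle_Rpower; [lra|].
    replace (INR (6 * 6)) with (IZR 36) by (rewrite INR_IZR_INZ; reflexivity).
    replace (INR 9) with (IZR 9) by (rewrite INR_IZR_INZ; reflexivity). lra. }
  unfold unip_degree.
  replace (hook_lengths [3%nat;1%nat;1%nat;1%nat]) with [6%nat;2%nat;1%nat;3%nat;2%nat;1%nat] by (vm_compute; reflexivity).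
  replace (a_inv [3%nat;1%nat;1%nat;1%nat]) with 6%nat by (vm_compute; reflexivity).
  apply exc_core with (cs := [138148416; 1912242816; 12704790384; 53951136048; 164505013452; 383576129856; 711203925825; 1076483533599; 1354939232907; 1437271435161; 1297494013802; 1003895395888; 669005431583; 385207535723; 191938740971; 82768675131; 30845497950; 9904679130; 2727329127; 639562111; 126504171; 20828987; 2802964; 300350; 24649; 1455; 55; 1]); auto.
  - intros h Hh; repeat (destruct Hh as [<-|Hh]; [lia|]); destruct Hh.
  - repeat constructor; lra.
  - intros s. unfold hornerR. cbn [seq map prodR fold_right]. ring.
Qed.

Lemma exc8 q : 2 <= INR q ->
  Rpower (INR q) (INR (7 * 7) / 4) <= unip_degree q (-1) 7 [3%nat;3%nat;1%nat].
Proof.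
  intros HQ. apply Rle_trans with (INR q ^ 13).
  { rewrite <- Rpower_pow by lra. apply Rle_Rpower; [lra|].
    replace (INR (7 * 7)) with (IZR 49) by (rewrite INR_IZR_INZ; reflexivity).
    replace (INR 13) with (IZR 13) by (rewrite INR_IZR_INZ; reflexivity). lra. }
  unfold unip_degree.
  replace (hook_lengths [3%nat;3%nat;1%nat]) with [5%nat;3%nat;2%nat;4%nat;2%nat;1%nat;1%nat] by (vm_compute; reflexivity).
  replace (a_inv [3%nat;3%nat;1%nat]) with 5%nat by (vm_compute; reflexivity).
  apply exc_core with (cs := [7471141920; 126381061296; 1035135653472; 5468213523816; 20937549704274; 61913324614599; 147106910071341; 288505790402241; 476112660946212; 670653857580916; 815124774723113; 861988030040792; 798209548619993; 650435598033848; 468122994987778; 298348216385472; 168666817581904; 84652728077026; 37719187324424; 14908751024792; 5218582798829; 1613490107900; 439030902623; 104619970113; 21694319709; 3882241533; 593099423; 76258280; 8094772; 690561; 45506; 2174; 67; 1]); auto.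
  - intros h Hh; repeat (destruct Hh as [<-|Hh]; [lia|]); destruct Hh.
  - repeat constructor; lra.
  - intros s. unfold hornerR. cbn [seq map prodR fold_right]. ring.
Qed.

Lemma q_ge2 q : prime_power q -> 2 <= INR q.
Proof.
  intros [p [k [Hp [Hk Eq]]]].
  assert (2 <= p)%Z by (apply prime_ge_2; auto).
  assert (p ^ 1 <= p ^ Z.of_nat k)%Z by (apply Z.pow_le_mono_r; lia).
  rewrite Z.pow_1_r in H0.
  assert (2 <= q)%nat by lia.
  apply le_INR in H1. simpl in H1. lra.
Qed.

Lemma rpow_to_pow Q n E : 2 <= Q -> (n * n <= 4 * E)%nat -> Rpower Q (INR (n * n) / 4) <= Q ^ E.
Proof.
  intros HQ H. rewrite <- Rpower_pow by lra. apply Rle_Rpower; [lra|].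
  apply le_INR in H. rewrite !mult_INR in *. simpl (INR 4) in H. lra.
Qed.

Lemma final1 Q n D N Hd : 2 <= Q -> 0 < Hd -> Hd <= N -> (n * n <= 4 * D)%nat ->
  Rpower Q (INR (n * n) / 4) <= Q ^ D * N / Hd.
Proof.
  intros HQ H1 H2 H3. eapply Rle_trans; [apply rpow_to_pow; eauto|].
  assert (0 < Q ^ D) by (apply pow_lt; lra).
  assert (1 <= N / Hd).
  { apply (Rmult_le_reg_r Hd); auto. unfold Rdiv. rewrite Rmult_assoc, Rinv_l by lra. lra. }
  unfold Rdiv. rewrite Rmult_assoc. fold (N / Hd). nra.
Qed.

Lemma final2 Q n D r N Hd : 2 <= Q -> 0 < Hd -> 1 <= N -> Hd <= Q ^ r -> (n * n + 4 * r <= 4 * D)%nat ->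
  Rpower Q (INR (n * n) / 4) <= Q ^ D * N / Hd.
Proof.
  intros HQ H1 H2 H3 H4. eapply Rle_trans; [apply (rpow_to_pow Q n (D - r)); auto; lia|].
  assert (EQ : Q ^ D = Q ^ (D - r) * Q ^ r) by (rewrite <- pow_add; f_equal; lia). rewrite EQ.
  assert (0 < Q ^ (D - r)) by (apply pow_lt; lra).
  assert (0 < Q ^ r) by (apply pow_lt; lra).
  assert (1 <= Q ^ r * N / Hd).
  { apply (Rmult_le_reg_r Hd); auto. unfold Rdiv. rewrite Rmult_assoc, Rinv_l by lra. nra. }
  replace (Q ^ (D - r) * Q ^ r * N / Hd) with (Q ^ (D - r) * (Q ^ r * N / Hd)) by (field; lra).
  nra.
Qed.

Theorem lemma6p5 (q n : nat) (eps : R) (lam : list nat) :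
  prime_power q ->
  (2 <= n)%nat ->
  (eps = 1 \/ eps = -1) ->
  is_partition lam n ->
  (2 * part lam 1 <= n)%nat ->
  Rpower (INR q) (INR (n * n) / 4) <= unip_degree q eps n lam.
Proof.
  intros Hpp Hn He [Hsort Hsum] Hhead.
  pose proof (q_ge2 q Hpp) as HQ.
  pose proof (noninc_of_nth lam Hsort) as Hni.
  destruct (noninc_split lam Hni) as [p [k [Ep Hpos]]].
  assert (Hnp : noninc p) by (rewrite Ep in Hni; eapply noninc_app_l; eauto).
  assert (Hsp : sumN p = n) by (rewrite <- (sum_zeros p k), <- Ep; exact Hsum).
  assert (Hup : unip_degree q eps n lam = unip_degree q eps n p).
  { unfold unip_degree, a_inv. rewrite Ep, hook_app_zeros, a_aux_zeros by (rewrite <- Ep; auto).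
    reflexivity. }
  destruct p as [|x ts]; [simpl in Hsp; lia|].
  assert (Hhx : (2 * x <= n)%nat).
  { unfold part in Hhead. rewrite Ep in Hhead. simpl in Hhead. lia. }
  assert (Hsq : (sqN (x :: ts) <= x * n)%nat).
  { rewrite <- Hsp. apply sq_le. apply noninc_head_bound; auto. }
  assert (Hsq2 : (sqN (x :: ts) <= n * n)%nat) by nia.
  rewrite Hup, (unip_formula q eps n (x :: ts) HQ He Hnp Hsp Hsq2).
  destruct (Dexp_eq n (x :: ts) Hnp Hsp Hsq2) as [HD _].
  assert (HHd : 0 < prodR (map (fk (INR q) eps) (hook_lengths (x :: ts)))).
  { apply (Hd_pos (INR q) eps HQ He). apply hooks_pos. }
  destruct He as [He1|Hem].
  - apply final1; auto; [|nia].
    rewrite <- Hsp. apply eps1_bound; auto.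
  - subst eps.
    destruct (classify (x :: ts) n Hnp Hpos Hsp Hn ltac:(simpl; lia)) as [[m Em]|[Hc|Hc]].
    + apply final1; auto; [|nia].
      rewrite Em in *. assert (Hm : (1 <= m)%nat) by (apply Hpos; simpl; auto).
      rewrite <- Hsp. change (sumN [m; m]) with (m + (m + 0))%nat. rewrite Nat.add_0_r.
      apply mm_ratio; auto.
    + apply (final2 (INR q) n _ (length (x :: ts))); auto; [| |nia].
      * apply N_ge1; auto.
      * apply Hd_le_Q; auto.
    + rewrite <- (unip_formula q (-1) n (x :: ts) HQ (or_intror eq_refl) Hnp Hsp Hsq2).
      unfold E2 in Hc. simpl In in Hc.
      repeat (destruct Hc as [Hc|Hc]; [rewrite <- Hc in Hsp |- *; vm_compute in Hsp; rewrite <- Hsp;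
        first [apply exc0|apply exc1|apply exc2|apply exc3|apply exc4|apply exc5|apply exc6|apply exc7|apply exc8]; auto|]).
      destruct Hc.
Qed.
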